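(* Let $k\geq1$, $a_1,\dots,a_k\in\mathbb{R}\setminus\{0\}$ and real exponents $\alpha_1<\cdots<\alpha_k$. Then $f:(0,\infty)\to\mathbb{R}$, $f(x)=\sum_{i=1}^k a_ix^{\alpha_i}$, is amenable.
   Context: Relative distance on $\mathbb{R}$: $\mathrm{dist}(x,y)=0$ if $x=y=0$, $\mathrm{dist}(x,y)=|\log(y/x)|$ if $xy>0$, and $\mathrm{dist}(x,y)=\infty$ otherwise. For a real analytic function $f$ on an open set $\Omega\subseteq\mathbb{R}$, not identically zero, the condition number is $\kappa(f,x)=0$ if $x=0$, $\kappa(f,x)=\infty$ if $x\neq0$ and $f(x)=0$, and $\kappa(f,x)=|x|\,|f'(x)|/|f(x)|$ otherwise; $\mu(f,x)=1+\kappa(f,x)$. $f:\Omega\to\mathbb{R}$ is amenable if there is $C>0$ such that for every $x\in\Omega$ with $\kappa(f,x)<\infty$, the set $B_x=\{y\in\mathbb{R}:\mathrm{dist}(y,x)<1/(C\mu(f,x))\}$ is contained in $\Omega$ and $\mu(f,y)\leq C\mu(f,x)$ for all $y\in B_x$. *)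

(* Defs.v *)
From Stdlib Require Import Reals Lra.
From Coquelicot Require Import Coquelicot.
Open Scope R_scope.

Definition rdist (x y : R) : Rbar :=
  if Req_EM_T x 0 then (if Req_EM_T y 0 then Finite 0 else p_infty)
  else if Rlt_dec 0 (x * y) then Finite (Rabs (ln (y / x)))
  else p_infty.

Definition kappa (f : R -> R) (x : R) : Rbar :=
  if Req_EM_T x 0 then Finite 0
  else if Req_EM_T (f x) 0 then p_infty
  else Finite (Rabs x * Rabs (Derive f x) / Rabs (f x)).

Definition mu (f : R -> R) (x : R) : Rbar := Rbar_plus (Finite 1) (kappa f x).

Definition amenable (Omega : R -> Prop) (f : R -> R) : Prop :=
  exists C : R, 0 < C /\
    forall x : R, Omega x -> Rbar_lt (kappa f x) p_infty ->
      forall y : R,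
        Rbar_lt (rdist y x) (Rbar_inv (Rbar_mult (Finite C) (mu f x))) ->
        Omega y /\ Rbar_le (mu f y) (Rbar_mult (Finite C) (mu f x)).

Definition gen_poly (k : nat) (a alpha : nat -> R) (x : R) : R :=
  sum_f_R0 (fun i => a i * Rpower x (alpha i)) (k - 1).

(* Main.v *)
Require Import Defs.
From Stdlib Require Import Reals Lra Lia Factorial ClassicalEpsilon List.
From Coquelicot Require Import Coquelicot.
Open Scope R_scope.

Lemma der_cont_pt f x l : is_derive f x l -> continuity_pt f x.
Proof.
  intro H. apply is_derive_Reals in H.
  apply derivable_continuous_pt. exists l. exact H.
Qed.

Lemma der_cont_eps f x l : is_derive f x l ->
  forall eps, 0 < eps -> exists d, 0 < d /\ forall y, Rabs (y - x) < d -> Rabs (f y - f x) < eps.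
Proof.
  intros H eps Heps. apply der_cont_pt in H.
  destruct (H eps Heps) as [d [Hd Hy]]. exists d. split; [exact Hd|].
  intros y Hyx. destruct (Req_dec y x) as [->|Hne].
  - rewrite Rminus_diag, Rabs_R0; exact Heps.
  - apply (Hy y). split. split; [exact I| auto]. exact Hyx.
Qed.

Lemma lip_bound f df a b B :
  (forall x, Rmin a b <= x <= Rmax a b -> is_derive f x (df x)) ->
  (forall x, Rmin a b <= x <= Rmax a b -> Rabs (df x) <= B) ->
  Rabs (f b - f a) <= B * Rabs (b - a).
Proof.
  intros Hd HB.
  destruct (MVT_gen f a b df) as [c [Hc Heq]].
  - intros x Hx. apply Hd. lra.
  - intros x Hx. eapply der_cont_pt. apply Hd. exact Hx.
  - rewrite Heq, Rabs_mult. apply Rmult_le_compat_r. apply Rabs_pos. apply HB. exact Hc.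
Qed.

Fixpoint sumr (f : nat -> R) (n : nat) : R :=
  match n with O => 0 | S m => sumr f m + f m end.

Lemma sumr_ext f g n : (forall i, (i < n)%nat -> f i = g i) -> sumr f n = sumr g n.
Proof.
  induction n; intros H; simpl; auto.
  rewrite IHn by (intros; apply H; lia). rewrite H by lia. reflexivity.
Qed.

Lemma sumr_plus f g n : sumr (fun i => f i + g i) n = sumr f n + sumr g n.
Proof. induction n; simpl; [lra|rewrite IHn; lra]. Qed.

Lemma sumr_scal c f n : sumr (fun i => c * f i) n = c * sumr f n.
Proof. induction n; simpl; [lra|rewrite IHn; lra]. Qed.

Lemma sumr_abs f n : Rabs (sumr f n) <= sumr (fun i => Rabs (f i)) n.
Proof.
  induction n; simpl. rewrite Rabs_R0; lra.
  eapply Rle_trans. apply Rabs_triang. lra.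
Qed.

Lemma sumr_zero f n : (forall i, (i < n)%nat -> f i = 0) -> sumr f n = 0.
Proof. induction n; intro H; simpl. lra. rewrite IHn, H by (intros; try apply H; lia). lra. Qed.

Lemma sum_f_R0_sumr f n : sum_f_R0 f n = sumr f (S n).
Proof. induction n; simpl. lra. rewrite IHn. simpl. reflexivity. Qed.

Lemma is_derive_sumr (F dF : nat -> R -> R) n t :
  (forall i, is_derive (F i) t (dF i t)) ->
  is_derive (fun t => sumr (fun i => F i t) n) t (sumr (fun i => dF i t) n).
Proof.
  intro H. induction n; simpl.
  - apply (is_derive_const 0).
  - apply (is_derive_plus (fun t => sumr (fun i => F i t) n) (F n)); auto.
Qed.

Lemma sumr_split_p f n p : (p < n)%nat ->
  sumr f n = sumr (fun i => if Nat.eqb i p then 0 else f i) n + f p.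
Proof.
  induction n; intro Hp. lia.
  simpl. destruct (Nat.eq_dec p n) as [->|Hne].
  - rewrite Nat.eqb_refl. rewrite (sumr_ext (fun i => if Nat.eqb i n then 0 else f i) f).
    lra. intros i Hi. destruct (Nat.eqb_spec i n); [lia|auto].
  - rewrite IHn by lia. destruct (Nat.eqb_spec n p); [lia|]. lra.
Qed.

Lemma abs_between a b x : Rmin a b <= x <= Rmax a b -> Rabs (x - a) <= Rabs (b - a).
Proof.
  unfold Rmin, Rmax. destruct (Rle_dec a b); intros;
  unfold Rabs; destruct (Rcase_abs (x - a)); destruct (Rcase_abs (b - a)); lra.
Qed.

Lemma vandermonde k : forall (b al : nat -> R),
  (forall i j, (i < j < k)%nat -> al i < al j) ->
  (forall j, (j < k)%nat -> sumr (fun i => b i * al i ^ j) k = 0) ->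
  forall i, (i < k)%nat -> b i = 0.
Proof.
  induction k as [|k IH]; intros b al Hal Hs i Hi. lia.
  assert (Hc : forall i, (i < k)%nat -> b i * (al i - al k) = 0).
  { apply (IH (fun i => b i * (al i - al k)) al).
    - intros; apply Hal; lia.
    - intros j Hj.
      assert (H1 := Hs (S j) ltac:(lia)). assert (H2 := Hs j ltac:(lia)).
      simpl in H1, H2.
      rewrite (sumr_ext _ (fun i => b i * al i ^ S j + (- al k) * (b i * al i ^ j))).
      2:{ intros; simpl; ring. }
      rewrite sumr_plus, sumr_scal.
      simpl in *. nra. }
  destruct (Nat.eq_dec i k) as [->|Hne].
  - assert (H0 := Hs 0%nat ltac:(lia)). simpl in H0.
    rewrite (sumr_zero (fun i => b i * 1)) in H0. lra.
    intros i0 Hi0. specialize (Hc i0 Hi0). assert (al i0 < al k) by (apply Hal; lia).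
    assert (b i0 = 0). { apply Rmult_integral in Hc. destruct Hc; auto. lra. } rewrite H1; ring.
  - specialize (Hc i ltac:(lia)). assert (al i < al k) by (apply Hal; lia).
    apply Rmult_integral in Hc. destruct Hc; auto. lra.
Qed.

Definition G (k : nat) (a al : nat -> R) (j : nat) (t : R) : R :=
  sumr (fun i => a i * al i ^ j * exp (al i * t)) k.

Lemma G_derive k a al j t : is_derive (G k a al j) t (G k a al (S j) t).
Proof.
  unfold G. apply (is_derive_sumr (fun i t => a i * al i ^ j * exp (al i * t))
     (fun i t => a i * al i ^ S j * exp (al i * t))).
  intro i. simpl.
  replace (a i * (al i * al i ^ j) * exp (al i * t)) with (a i * al i ^ j * (al i * exp (al i * t))) by ring.
  apply is_derive_scal.
  auto_derive. auto. ring.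
Qed.

Lemma G_nonvanish k a al : (1 <= k)%nat -> (forall i, (i < k)%nat -> a i <> 0) ->
  (forall i j, (i < j < k)%nat -> al i < al j) ->
  forall t, exists m, G k a al m t <> 0.
Proof.
  intros Hk Ha Hal t. apply Classical_Prop.NNPP. intro Hn.
  assert (Hb := vandermonde k (fun i => a i * exp (al i * t)) al Hal).
  assert (0 < k)%nat as H0 by lia.
  specialize (Hb ltac:(intros j Hj; apply Classical_Prop.NNPP; intro Hj2; apply Hn; exists j;
    unfold G; rewrite (sumr_ext _ (fun i => a i * exp (al i * t) * al i ^ j)); [auto| intros; ring]) 0%nat H0).
  apply Rmult_integral in Hb. destruct Hb as [Hb|Hb]. apply (Ha 0%nat H0 Hb).
  generalize (exp_pos (al 0%nat * t)); lra.
Qed.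

Section Local.
Variable H : nat -> R -> R.
Hypothesis Hd : forall j t, is_derive (H j) t (H (S j) t).

Lemma fact_ge1 p : 1 <= INR (fact p).
Proof. apply (le_INR 1). generalize (lt_O_fact p); lia. Qed.

Lemma der_mono c t0 p D x : is_derive (fun t => c * (t - t0) ^ (S p) / D) x (c * INR (S p) * (x - t0) ^ p / D).
Proof.
  apply (is_derive_ext (fun t => (c / D) * (t - t0) ^ (S p))). intro t. change (c / D * (t - t0) ^ S p = c * (t - t0) ^ S p / D :> R). unfold Rdiv; ring.
  replace (c * INR (S p) * (x - t0) ^ p / D) with ((c / D) * (INR (S p) * 1 * (x - t0) ^ Init.Nat.pred (S p))) by (simpl; unfold Rdiv; ring).
  apply is_derive_scal. apply (is_derive_pow (fun t => t - t0) (S p) x 1).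
  auto_derive; auto; ring.
Qed.

Lemma taylor m t0 c d eps : H m t0 = c -> (forall j, (j < m)%nat -> H j t0 = 0) ->
  (forall t, Rabs (t - t0) < d -> Rabs (H m t - c) <= eps * Rabs c) ->
  forall p, (p <= m)%nat -> forall t, Rabs (t - t0) < d ->
  Rabs (H (m - p) t - c * (t - t0) ^ p / INR (fact p)) <= eps * Rabs c * Rabs (t - t0) ^ p.
Proof.
  intros Hc Hz Hcont p. induction p as [|p IH]; intros Hp t Ht.
  - rewrite Nat.sub_0_r. simpl. replace (c * 1 / 1) with c by field. rewrite Rmult_1_r. auto.
  - set (f := fun t => H (m - S p) t - c * (t - t0) ^ S p / INR (fact (S p))).
    set (df := fun t => H (m - p) t - c * (t - t0) ^ p / INR (fact p)).
    assert (Hf0 : f t0 = 0).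
    { unfold f. rewrite Hz by lia. rewrite Rminus_diag, pow_i by lia. unfold Rdiv. ring. }
    assert (Hder : forall x, is_derive f x (df x)).
    { intro x. unfold f, df.
      replace (m - p)%nat with (S (m - S p)) by lia.
      apply (is_derive_minus (H (m - S p)) (fun t => c * (t - t0) ^ S p / INR (fact (S p)))).
      apply Hd.
      assert (INR (fact p) <> 0) by (generalize (fact_ge1 p); lra).
      assert (INR (fact (S p)) <> 0) by (generalize (fact_ge1 (S p)); lra).
      assert (EF: INR (fact (S p)) = INR (S p) * INR (fact p)) by (rewrite <- mult_INR; reflexivity).
      assert (HS : INR (S p) <> 0) by (apply not_0_INR; lia).
      replace (c * (x - t0) ^ p / INR (fact p)) with (c * INR (S p) * (x - t0) ^ p / INR (fact (S p))) by (rewrite EF; field; auto).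
      apply der_mono. }
    assert (Hb := lip_bound f df t0 t (eps * Rabs c * Rabs (t - t0) ^ p)
      (fun x _ => Hder x)).
    assert (HB : forall x, Rmin t0 t <= x <= Rmax t0 t -> Rabs (df x) <= eps * Rabs c * Rabs (t - t0) ^ p).
    { intros x Hx.
      assert (Hxt : Rabs (x - t0) <= Rabs (t - t0)).
      { apply abs_between; auto. }
      eapply Rle_trans. apply IH. lia. lra.
      assert (0 <= eps * Rabs c).
      { specialize (Hcont t0). rewrite Rminus_diag, Rabs_R0 in Hcont.
        assert (0 < d) by (generalize (Rabs_pos (t - t0)); lra).
        eapply Rle_trans. 2: apply Hcont. apply Rabs_pos. lra. }
      apply Rmult_le_compat_l; auto. apply pow_incr. split; auto. apply Rabs_pos. }
    specialize (Hb HB). rewrite Hf0, Rminus_0_r in Hb. unfold f in Hb.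
    simpl pow at 2. replace (eps * Rabs c * (Rabs (t - t0) * Rabs (t - t0) ^ p))
      with (eps * Rabs c * Rabs (t - t0) ^ p * Rabs (t - t0)) by ring. exact Hb.
Qed.

Lemma local_main m t0 : H m t0 <> 0 -> (forall j, (j < m)%nat -> H j t0 = 0) ->
  exists d K, 0 < d /\ forall t, Rabs (t - t0) < d ->
    Rabs (H 0 t * H 2 t) <= K * (H 0 t ^ 2 + H 1 t ^ 2).
Proof.
  intros Hm Hz.
  destruct m as [|[|q]].
  - set (c := H 0 t0). assert (Hc : 0 < Rabs c) by (apply Rabs_pos_lt; auto).
    destruct (der_cont_eps _ _ _ (Hd 0 t0) (Rabs c / 2)) as [d1 [Hd1 H1]]. lra.
    destruct (der_cont_eps _ _ _ (Hd 2 t0) 1) as [d2 [Hd2 H2]]. lra.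
    exists (Rmin d1 d2), (2 * (Rabs (H 2 t0) + 1) / Rabs c). split. apply Rmin_pos; auto.
    intros t Ht. assert (Ht1 : Rabs (t - t0) < d1) by (eapply Rlt_le_trans; [exact Ht| apply Rmin_l]).
    assert (Ht2 : Rabs (t - t0) < d2) by (eapply Rlt_le_trans; [exact Ht| apply Rmin_r]).
    specialize (H1 t Ht1). specialize (H2 t Ht2).
    assert (A0 : Rabs c / 2 <= Rabs (H 0 t)).
    { generalize (Rabs_triang_inv c (c - H 0 t)). replace (c - (c - H 0 t)) with (H 0 t) by ring.
      rewrite (Rabs_minus_sym c). fold c in H1. lra. }
    assert (A2 : Rabs (H 2 t) <= Rabs (H 2 t0) + 1).
    { generalize (Rabs_triang (H 2 t - H 2 t0) (H 2 t0)). replace (H 2 t - H 2 t0 + H 2 t0) with (H 2 t) by ring. lra. }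
    rewrite Rabs_mult.
    assert (E : H 0 t ^ 2 = Rabs (H 0 t) * Rabs (H 0 t)).
    { rewrite <- Rabs_mult. rewrite Rabs_pos_eq. ring. nra. }
    assert (0 <= H 1 t ^ 2) by nra.
    apply Rle_trans with (2 * (Rabs (H 2 t0) + 1) / Rabs c * H 0 t ^ 2).
    2:{ apply Rmult_le_compat_l. apply Rmult_le_pos. generalize (Rabs_pos (H 2 t0)); lra.
        left; apply Rinv_0_lt_compat; auto. lra. }
    rewrite E. unfold Rdiv.
    apply Rle_trans with (Rabs (H 0 t) * (Rabs (H 2 t0) + 1)).
    apply Rmult_le_compat_l; auto. apply Rabs_pos.
    assert (Rabs (H 0 t) * (2 / Rabs c) >= 1).
    { apply Rle_ge. apply Rmult_le_reg_r with (Rabs c / 2). lra.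
      field_simplify; lra. }
    generalize (Rabs_pos (H 0 t)) (Rabs_pos (H 2 t0)). intros.
    replace (2 * (Rabs (H 2 t0) + 1) * / Rabs c * (Rabs (H 0 t) * Rabs (H 0 t)))
      with (Rabs (H 0 t) * (Rabs (H 2 t0) + 1) * (Rabs (H 0 t) * (2 / Rabs c))) by (field; lra).
    rewrite <- (Rmult_1_r (Rabs (H 0 t) * (Rabs (H 2 t0) + 1))) at 1.
    apply Rmult_le_compat_l. apply Rmult_le_pos; lra. lra.
  - assert (Hz0 : H 0 t0 = 0) by (apply Hz; lia).
    set (c := H 1 t0). assert (Hc : 0 < Rabs c) by (apply Rabs_pos_lt; auto).
    destruct (der_cont_eps _ _ _ (Hd 0 t0) 1) as [d0 [Hd0 H0]]. lra.
    destruct (der_cont_eps _ _ _ (Hd 1 t0) (Rabs c / 2)) as [d1 [Hd1 H1]]. lra.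
    destruct (der_cont_eps _ _ _ (Hd 2 t0) 1) as [d2 [Hd2 H2]]. lra.
    fold c in H1.
    exists (Rmin d0 (Rmin d1 d2)), (4 * (Rabs (H 2 t0) + 1) / (Rabs c * Rabs c)). split.
    apply Rmin_pos; auto. apply Rmin_pos; auto.
    intros t Ht. assert (Ht0 : Rabs (t - t0) < d0) by (eapply Rlt_le_trans; [exact Ht| apply Rmin_l]).
    assert (Ht1 : Rabs (t - t0) < d1) by (eapply Rlt_le_trans; [exact Ht| eapply Rle_trans; [apply Rmin_r|apply Rmin_l]]).
    assert (Ht2 : Rabs (t - t0) < d2) by (eapply Rlt_le_trans; [exact Ht| eapply Rle_trans; [apply Rmin_r|apply Rmin_r]]).
    specialize (H0 t Ht0). specialize (H1 t Ht1). specialize (H2 t Ht2).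
    rewrite Hz0, Rminus_0_r in H0.
    assert (A1 : Rabs c / 2 <= Rabs (H 1 t)).
    { generalize (Rabs_triang_inv c (c - H 1 t)). replace (c - (c - H 1 t)) with (H 1 t) by ring.
      rewrite (Rabs_minus_sym c). lra. }
    assert (A2 : Rabs (H 2 t) <= Rabs (H 2 t0) + 1).
    { generalize (Rabs_triang (H 2 t - H 2 t0) (H 2 t0)). replace (H 2 t - H 2 t0 + H 2 t0) with (H 2 t) by ring. lra. }
    set (B := Rabs (H 2 t0) + 1) in *.
    assert (E : H 1 t ^ 2 = Rabs (H 1 t) * Rabs (H 1 t)).
    { rewrite <- Rabs_mult. rewrite Rabs_pos_eq. ring. nra. }
    assert (0 <= H 0 t ^ 2) by nra.
    assert (HB : 1 <= B) by (unfold B; generalize (Rabs_pos (H 2 t0)); lra).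
    apply Rle_trans with B.
    { rewrite Rabs_mult. generalize (Rabs_pos (H 0 t)) (Rabs_pos (H 2 t)). intros. 
      apply Rle_trans with (1 * B). apply Rmult_le_compat; lra. lra. }
    apply Rle_trans with (4 * B / (Rabs c * Rabs c) * H 1 t ^ 2).
    2:{ apply Rmult_le_compat_l. apply Rmult_le_pos. lra. left; apply Rinv_0_lt_compat; nra. lra. }
    rewrite E.
    assert (Rabs c * Rabs c <= 4 * (Rabs (H 1 t) * Rabs (H 1 t))) by nra.
    apply Rmult_le_reg_r with (Rabs c * Rabs c). nra.
    replace (4 * B / (Rabs c * Rabs c) * (Rabs (H 1 t) * Rabs (H 1 t)) * (Rabs c * Rabs c))
      with (B * (4 * (Rabs (H 1 t) * Rabs (H 1 t)))) by (field; lra).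
    apply Rmult_le_compat_l; lra.
  - set (m := S (S q)) in *. set (c := H m t0). assert (Hc : 0 < Rabs c) by (apply Rabs_pos_lt; auto).
    set (F1 := INR (fact (S q))). assert (HF1 : 1 <= F1) by apply fact_ge1.
    set (eps := / (2 * F1)).
    assert (Heps : 0 < eps) by (unfold eps; apply Rinv_0_lt_compat; lra).
    assert (Heps2 : eps * (2 * F1) = 1) by (unfold eps; field; lra).
    destruct (der_cont_eps _ _ _ (Hd m t0) (eps * Rabs c)) as [d [Hdd Hcont]]. nra.
    fold c in Hcont.
    assert (Hcont' : forall t, Rabs (t - t0) < d -> Rabs (H m t - c) <= eps * Rabs c).
    { intros; left; auto. }
    exists d, (16 * F1 * F1). split; auto. intros t Ht.
    assert (T0 := taylor m t0 c d eps eq_refl Hz Hcont' m (le_n _) t Ht).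
    assert (T1 := taylor m t0 c d eps eq_refl Hz Hcont' (S q) ltac:(unfold m; lia) t Ht).
    assert (T2 := taylor m t0 c d eps eq_refl Hz Hcont' q ltac:(unfold m; lia) t Ht).
    replace (m - m)%nat with 0%nat in T0 by lia.
    replace (m - S q)%nat with 1%nat in T1 by (unfold m; lia).
    replace (m - q)%nat with 2%nat in T2 by (unfold m; lia).
    set (u := Rabs (t - t0)) in *. set (w := u ^ q) in *.
    assert (Hu : 0 <= u) by apply Rabs_pos. assert (Hw : 0 <= w) by (apply pow_le; auto).
    assert (Hmq : m = S (S q)) by reflexivity.
    assert (F0ge : 1 <= INR (fact m)) by apply fact_ge1.
    assert (F2ge : 1 <= INR (fact q)) by apply fact_ge1.
    assert (P0 : Rabs (c * (t - t0) ^ m / INR (fact m)) <= Rabs c * (w * u * u)).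
    { unfold Rdiv. rewrite !Rabs_mult, <- RPow_abs, Rabs_inv, (Rabs_pos_eq (INR _)) by apply pos_INR. fold u.
      rewrite Hmq. simpl pow. fold w.
      apply Rle_trans with (Rabs c * (u * (u * w)) * 1).
      apply Rmult_le_compat_l. apply Rmult_le_pos. lra. apply Rmult_le_pos; auto. apply Rmult_le_pos; auto.
      rewrite <- Rinv_1. apply Rinv_le_contravar. lra. rewrite <- Hmq. lra. lra. }
    assert (P2 : Rabs (c * (t - t0) ^ q / INR (fact q)) <= Rabs c * w).
    { unfold Rdiv. rewrite !Rabs_mult, <- RPow_abs, Rabs_inv, (Rabs_pos_eq (INR _)) by apply pos_INR. fold u. fold w.
      apply Rle_trans with (Rabs c * w * 1).
      apply Rmult_le_compat_l. apply Rmult_le_pos; lra.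
      rewrite <- Rinv_1. apply Rinv_le_contravar; lra. lra. }
    assert (P1 : Rabs (c * (t - t0) ^ S q / INR (fact (S q))) = Rabs c * (u * w) / F1).
    { unfold Rdiv. rewrite !Rabs_mult, <- RPow_abs, Rabs_inv, (Rabs_pos_eq (INR _)) by apply pos_INR. fold u.
      simpl pow. fold w. fold F1. ring. }
    assert (B0 : Rabs (H 0 t) <= 2 * Rabs c * (w * u * u)).
    { generalize (Rabs_triang (H 0 t - c * (t - t0) ^ m / INR (fact m)) (c * (t - t0) ^ m / INR (fact m))).
      replace (H 0 t - c * (t - t0) ^ m / INR (fact m) + c * (t - t0) ^ m / INR (fact m)) with (H 0 t) by ring.
      assert (Um : u ^ m = u * (u * w)) by (rewrite Hmq; reflexivity). rewrite Um in T0.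
      assert (eps <= 1) by nra. 
      assert (eps * Rabs c * (u * (u * w)) <= Rabs c * (w * u * u)).
      { replace (Rabs c * (w * u * u)) with (1 * Rabs c * (u * (u * w))) by ring.
        apply Rmult_le_compat_r. apply Rmult_le_pos; auto. apply Rmult_le_pos; auto.
        apply Rmult_le_compat_r; lra. }
      lra. }
    assert (B2 : Rabs (H 2 t) <= 2 * Rabs c * w).
    { generalize (Rabs_triang (H 2 t - c * (t - t0) ^ q / INR (fact q)) (c * (t - t0) ^ q / INR (fact q))).
      replace (H 2 t - c * (t - t0) ^ q / INR (fact q) + c * (t - t0) ^ q / INR (fact q)) with (H 2 t) by ring.
      assert (eps <= 1) by nra.
      assert (eps * Rabs c * w <= Rabs c * w).
      { apply Rmult_le_compat_r; auto. nra. }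
      lra. }
    assert (B1 : Rabs c * (u * w) / (2 * F1) <= Rabs (H 1 t)).
    { generalize (Rabs_triang_inv (c * (t - t0) ^ S q / INR (fact (S q))) (c * (t - t0) ^ S q / INR (fact (S q)) - H 1 t)).
      replace (c * (t - t0) ^ S q / INR (fact (S q)) - (c * (t - t0) ^ S q / INR (fact (S q)) - H 1 t)) with (H 1 t) by ring.
      rewrite (Rabs_minus_sym (c * _ / _)). rewrite P1.
      assert (Uq : u ^ S q = u * w) by reflexivity. rewrite Uq in T1.
      replace (eps * Rabs c * (u * w)) with (Rabs c * (u * w) / (2 * F1)) in T1 by (unfold eps; field; lra).
      intro. replace (Rabs c * (u * w) / (2 * F1)) with (Rabs c * (u * w) / F1 - Rabs c * (u * w) / (2 * F1)) by (field; lra).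
      lra. }
    set (X := Rabs c * (u * w)) in *.
    assert (HX : 0 <= X) by (unfold X; apply Rmult_le_pos; [lra| apply Rmult_le_pos; auto]).
    assert (E : H 1 t ^ 2 = Rabs (H 1 t) * Rabs (H 1 t)).
    { rewrite <- Rabs_mult. rewrite Rabs_pos_eq. ring. nra. }
    assert (0 <= H 0 t ^ 2) by nra.
    rewrite Rabs_mult.
    apply Rle_trans with (4 * (X * X)).
    { replace (4 * (X * X)) with ((2 * Rabs c * (w * u * u)) * (2 * Rabs c * w)) by (unfold X; ring).
      apply Rmult_le_compat; auto; apply Rabs_pos. }
    apply Rle_trans with (16 * F1 * F1 * H 1 t ^ 2).
    2:{ assert (0 <= 16 * F1 * F1) by nra. nra. }
    rewrite E.
    assert (X / (2 * F1) * (X / (2 * F1)) <= Rabs (H 1 t) * Rabs (H 1 t)).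
    { apply Rmult_le_compat; auto; apply Rmult_le_pos; auto; left; apply Rinv_0_lt_compat; lra. }
    replace (4 * (X * X)) with (16 * F1 * F1 * (X / (2 * F1) * (X / (2 * F1)))) by (field; lra).
    apply Rmult_le_compat_l. nra. auto.
Qed.
Lemma local_KI t0 : (exists m, H m t0 <> 0) ->
  exists d K, 0 < d /\ forall t, Rabs (t - t0) < d ->
    Rabs (H 0 t * H 2 t) <= K * (H 0 t ^ 2 + H 1 t ^ 2).
Proof.
  intros [m Hm]. revert Hm. induction m as [m IH] using (well_founded_induction Wf_nat.lt_wf). intro Hm.
  destruct (Classical_Prop.classic (exists j, (j < m)%nat /\ H j t0 <> 0)) as [[j [Hj1 Hj2]]|Hn].
  - exact (IH j Hj1 Hj2).
  - apply (local_main m); auto. intros j Hj. apply Classical_Prop.NNPP. intro. apply Hn. exists j; auto.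
Qed.
End Local.

Lemma exp_small c be eps : be < 0 -> 0 < eps -> exists T, forall t, T <= t -> Rabs (c * exp (be * t)) <= eps.
Proof.
  intros Hb He. exists (Rabs c / (eps * - be) + 1). intros t Ht.
  assert (Hc := Rabs_pos c).
  assert (0 < eps * - be) by nra.
  assert (0 <= Rabs c / (eps * - be)) by (apply Rmult_le_pos; [lra| left; apply Rinv_0_lt_compat; lra]).
  assert (E1 : Rabs c / (eps * - be) * (eps * - be) = Rabs c) by (field; lra).
  rewrite Rabs_mult, (Rabs_pos_eq (exp _)) by (left; apply exp_pos).
  assert (Hx := exp_ineq1_le (- be * t)).
  assert (Hprod : exp (be * t) * exp (- be * t) = 1) by (rewrite <- exp_plus; replace (be * t + - be * t) with 0 by ring; apply exp_0).
  assert (Rabs c <= eps * exp (- be * t)).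
  { assert (eps * (- be * t) >= Rabs c) by nra. nra. }
  assert (0 < exp (be * t)) by apply exp_pos.
  nra.
Qed.

Lemma tail n p (c be : nat -> R) : (forall i, (i < n)%nat -> i <> p -> be i < 0) ->
  forall eps, 0 < eps -> exists T, forall t, T <= t ->
  Rabs (sumr (fun i => if Nat.eqb i p then 0 else c i * exp (be i * t)) n) <= eps.
Proof.
  induction n as [|n IH]; intros Hb eps He.
  - exists 0. intros. simpl. rewrite Rabs_R0. lra.
  - destruct (IH ltac:(intros; apply Hb; lia) (eps / 2) ltac:(lra)) as [T1 HT1].
    destruct (Nat.eq_dec n p) as [->|Hne].
    + exists T1. intros t Ht. simpl. rewrite Nat.eqb_refl, Rplus_0_r. specialize (HT1 t Ht). lra.
    + destruct (exp_small (c n) (be n) (eps / 2) (Hb n ltac:(lia) Hne) ltac:(lra)) as [T2 HT2].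
      exists (Rmax T1 T2). intros t Ht. simpl. destruct (Nat.eqb_spec n p); [lia|].
      eapply Rle_trans. apply Rabs_triang.
      assert (HT1' := HT1 t ltac:(eapply Rle_trans; [apply Rmax_l| exact Ht])).
      assert (HT2' := HT2 t ltac:(eapply Rle_trans; [apply Rmax_r| exact Ht])).
      lra.
Qed.

Lemma G_factor k a al p j t : (p < k)%nat ->
  G k a al j t = exp (al p * t) *
    (sumr (fun i => if Nat.eqb i p then 0 else (a i * al i ^ j) * exp ((al i - al p) * t)) k + a p * al p ^ j).
Proof.
  intro Hp. unfold G.
  replace (a p * al p ^ j) with ((a p * al p ^ j) * exp ((al p - al p) * t))
    by (replace ((al p - al p) * t) with 0 by ring; rewrite exp_0; ring).
  rewrite <- (sumr_split_p (fun i => (a i * al i ^ j) * exp ((al i - al p) * t)) k p Hp).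
  rewrite <- sumr_scal. apply sumr_ext. intros i _.
  replace (exp (al i * t)) with (exp (al p * t) * exp ((al i - al p) * t)).
  ring. rewrite <- exp_plus. f_equal. ring.
Qed.

Lemma dominant k a al p : (p < k)%nat -> a p <> 0 -> (forall i, (i < k)%nat -> i <> p -> al i < al p) ->
  exists T K, forall t, T <= t -> G k a al 0 t <> 0 /\ Rabs (G k a al 2 t) <= K * Rabs (G k a al 0 t).
Proof.
  intros Hp Ha Hal.
  assert (Hap : 0 < Rabs (a p)) by (apply Rabs_pos_lt; auto).
  assert (Hbe : forall i, (i < k)%nat -> i <> p -> al i - al p < 0) by (intros i Hi Hip; specialize (Hal i Hi Hip); lra).
  destruct (tail k p (fun i => a i * al i ^ 0) (fun i => al i - al p) Hbe (Rabs (a p) / 2) ltac:(lra)) as [T0 HT0].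
  destruct (tail k p (fun i => a i * al i ^ 2) (fun i => al i - al p) Hbe 1 ltac:(lra)) as [T2 HT2].
  exists (Rmax T0 T2), (2 * (Rabs (a p) * al p ^ 2 + 1) / Rabs (a p)).
  intros t Ht.
  specialize (HT0 t ltac:(eapply Rle_trans; [apply Rmax_l| exact Ht])).
  specialize (HT2 t ltac:(eapply Rle_trans; [apply Rmax_r| exact Ht])).
  rewrite !(G_factor k a al p _ t Hp). cbv beta in HT0, HT2.
  set (S0 := sumr (fun i => if Nat.eqb i p then 0 else a i * al i ^ 0 * exp ((al i - al p) * t)) k) in *.
  set (S2 := sumr (fun i => if Nat.eqb i p then 0 else a i * al i ^ 2 * exp ((al i - al p) * t)) k) in *.
  assert (He := exp_pos (al p * t)).
  assert (A0 : Rabs (a p) / 2 <= Rabs (S0 + a p * al p ^ 0)).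
  { simpl pow. rewrite Rmult_1_r. generalize (Rabs_triang_inv (a p) (- S0)).
    replace (a p - - S0) with (S0 + a p) by ring. rewrite Rabs_Ropp. lra. }
  assert (A2 : Rabs (S2 + a p * al p ^ 2) <= Rabs (a p) * al p ^ 2 + 1).
  { eapply Rle_trans. apply Rabs_triang. rewrite Rabs_mult, (Rabs_pos_eq (al p ^ 2)) by (apply pow2_ge_0). rewrite Rplus_comm. apply Rplus_le_compat_l. exact HT2. }
  split.
  - intro Hz. apply Rmult_integral in Hz. destruct Hz as [Hz|Hz]. lra.
    rewrite Hz, Rabs_R0 in A0. lra.
  - rewrite !Rabs_mult, !(Rabs_pos_eq (exp _)) by lra.
    assert (0 <= al p ^ 2) by apply pow2_ge_0.
    assert (0 < Rabs (a p) * al p ^ 2 + 1) by nra.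
    set (Q := Rabs (a p) * al p ^ 2 + 1) in *.
    assert (E : 2 * Q / Rabs (a p) * (Rabs (a p) / 2) = Q) by (field; lra).
    assert (0 <= 2 * Q / Rabs (a p)) by (apply Rmult_le_pos; [lra| left; apply Rinv_0_lt_compat; lra]).
    assert (Q <= 2 * Q / Rabs (a p) * Rabs (S0 + a p * al p ^ 0)) by nra.
    nra.
Qed.

Lemma G_refl k a al j t : (j = 0 \/ j = 2)%nat -> G k a al j (- t) = G k a (fun i => - al i) j t.
Proof.
  intro Hj. unfold G. apply sumr_ext. intros i _.
  replace (al i * - t) with (- al i * t) by ring.
  destruct Hj as [->| ->]; simpl; ring.
Qed.

Lemma compact_K (P : R -> R -> Prop)
  (mono : forall K K' t, K <= K' -> P K t -> P K' t)
  (loc : forall t0, exists d K, 0 < d /\ forall t, Rabs (t - t0) < d -> P K t) a b :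
  exists K, forall t, a <= t <= b -> P K t.
Proof.
  assert (loc' : forall t0, exists q : R * R, 0 < fst q /\ forall t, Rabs (t - t0) < fst q -> P (snd q) t).
  { intro t0. destruct (loc t0) as [d [K [Hd HK]]]. exists (d, K). simpl. auto. }
  set (pf := fun t0 => proj1_sig (constructive_indefinite_description _ (loc' t0))).
  assert (Hpf : forall t0, 0 < fst (pf t0) /\ forall t, Rabs (t - t0) < fst (pf t0) -> P (snd (pf t0)) t).
  { intro t0. unfold pf. apply (proj2_sig (constructive_indefinite_description _ (loc' t0))). }
  set (delta := fun x : Compactness.Tn 1 R => mkposreal (fst (pf (fst x))) (proj1 (Hpf (fst x)))).
  apply Classical_Prop.NNPP. intro Hn.
  apply (compactness_list 1 (a, tt) (b, tt) delta). intros [l Hl]. apply Hn.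
  exists (fold_right (fun q acc => Rmax (snd (pf (fst q))) acc) 0 l).
  assert (Hin : forall q, In q l -> snd (pf (fst q)) <= fold_right (fun q acc => Rmax (snd (pf (fst q))) acc) 0 l).
  { clear. induction l as [|q0 l IH]; simpl; intros q Hq. destruct Hq.
    destruct Hq as [<-|Hq]. apply Rmax_l. eapply Rle_trans. apply IH; auto. apply Rmax_r. }
  intros t Ht. destruct (Hl (t, tt) ltac:(simpl; auto)) as [[t1 u] [Hq [_ Hc]]].
  simpl in Hc. destruct Hc as [Hc _].
  apply (mono (snd (pf t1))). apply (Hin (t1, u) Hq).
  apply (proj2 (Hpf t1)). exact Hc.
Qed.

Lemma global_KI k a al : (1 <= k)%nat -> (forall i, (i < k)%nat -> a i <> 0) ->
  (forall i j, (i < j < k)%nat -> al i < al j) ->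
  exists K, 0 <= K /\ forall t,
    Rabs (G k a al 0 t * G k a al 2 t) <= K * (G k a al 0 t ^ 2 + G k a al 1 t ^ 2).
Proof.
  intros Hk Ha Hal.
  destruct (dominant k a al (k - 1) ltac:(lia) ltac:(apply Ha; lia)
     ltac:(intros i Hi Hne; apply Hal; lia)) as [Tp [Kp HTp]].
  destruct (dominant k a (fun i => - al i) 0 ltac:(lia) ltac:(apply Ha; lia)
     ltac:(intros i Hi Hne; assert (al 0%nat < al i) by (apply Hal; lia); lra)) as [Tm [Km HTm]].
  set (P := fun K t => Rabs (G k a al 0 t * G k a al 2 t) <= K * (G k a al 0 t ^ 2 + G k a al 1 t ^ 2)).
  assert (mono : forall K K' t, K <= K' -> P K t -> P K' t).
  { unfold P. intros K K' t HK H. eapply Rle_trans. exact H. apply Rmult_le_compat_r; auto. nra. }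
  destruct (compact_K P mono
    (fun t0 => local_KI (G k a al) (G_derive k a al) t0 (G_nonvanish k a al Hk Ha Hal t0)) (- Tm) Tp) as [Kc HKc].
  exists (Rmax (Rmax Kp Km) (Rmax Kc 0)). split. eapply Rle_trans; [|apply Rmax_r]. apply Rmax_r.
  intro t. fold (P (Rmax (Rmax Kp Km) (Rmax Kc 0)) t).
  assert (HG : forall K0, K0 <= Rmax (Rmax Kp Km) (Rmax Kc 0) ->
     Rabs (G k a al 2 t) <= K0 * Rabs (G k a al 0 t) -> P (Rmax (Rmax Kp Km) (Rmax Kc 0)) t).
  { intros K0 HK0 H. unfold P. rewrite Rabs_mult.
    assert (E : G k a al 0 t ^ 2 = Rabs (G k a al 0 t) * Rabs (G k a al 0 t)).
    { rewrite <- Rabs_mult. rewrite Rabs_pos_eq. ring. nra. }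
    assert (0 <= G k a al 1 t ^ 2) by nra.
    assert (0 <= Rmax (Rmax Kp Km) (Rmax Kc 0)) by (eapply Rle_trans; [|apply Rmax_r]; apply Rmax_r).
    generalize (Rabs_pos (G k a al 0 t)). intro.
    apply Rle_trans with (Rabs (G k a al 0 t) * (K0 * Rabs (G k a al 0 t))).
    apply Rmult_le_compat_l; auto.
    apply Rle_trans with (Rmax (Rmax Kp Km) (Rmax Kc 0) * G k a al 0 t ^ 2).
    rewrite E. replace (Rabs (G k a al 0 t) * (K0 * Rabs (G k a al 0 t))) with (K0 * (Rabs (G k a al 0 t) * Rabs (G k a al 0 t))) by ring.
    apply Rmult_le_compat_r; nra. nra. }
  destruct (Rle_dec Tp t) as [H1|H1].
  { apply (HG Kp). eapply Rle_trans; [|apply Rmax_l]. apply Rmax_l. apply (HTp t H1). }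
  destruct (Rle_dec t (- Tm)) as [H2|H2].
  { apply (HG Km). eapply Rle_trans; [|apply Rmax_l]. apply Rmax_r.
    destruct (HTm (- t) ltac:(lra)) as [_ Hb].
    rewrite <- !G_refl in Hb by lia. rewrite Ropp_involutive in Hb. exact Hb. }
  apply (mono Kc). eapply Rle_trans; [|apply Rmax_r]. apply Rmax_l. apply HKc. lra.
Qed.

Lemma cont_ind (P : R -> Prop) a b : a <= b ->
  (forall u, a <= u <= b -> (forall v, a <= v < u -> P v) ->
     exists e, 0 < e /\ forall v, a <= v < u + e -> P v) ->
  forall v, a <= v <= b -> P v.
Proof.
  intros Hab Hyp.
  set (E := fun u => a <= u <= b /\ forall v, a <= v < u -> P v).
  assert (Hb : bound E) by (exists b; intros u [Hu _]; lra).
  assert (Ha : exists u, E u) by (exists a; split; [lra| intros; lra]).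
  destruct (completeness E Hb Ha) as [s [Hub Hlub]].
  assert (Has : a <= s) by (apply Hub; split; [lra| intros; lra]).
  assert (Hsb : s <= b) by (apply Hlub; intros u [Hu _]; lra).
  assert (Hs : forall v, a <= v < s -> P v).
  { intros v Hv. apply Classical_Prop.NNPP. intro Hn.
    assert (s <= v); [|lra]. apply Hlub. intros u [Hu HPu].
    destruct (Rle_dec u v) as [|Hlt]; auto. exfalso. apply Hn. apply HPu. lra. }
  destruct (Hyp s ltac:(lra) Hs) as [e [He HPe]].
  destruct (Rlt_dec s b) as [Hlt|Hge].
  - exfalso. set (u' := Rmin (s + e / 2) b).
    assert (Eu : E u').
    { split. unfold u'. split. apply Rmin_glb; lra. apply Rmin_r.
      intros v Hv. apply HPe. split. lra. assert (u' <= s + e / 2) by apply Rmin_l. lra. }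
    assert (u' <= s) by (apply Hub; auto).
    unfold u' in *. unfold Rmin in *. destruct (Rle_dec (s + e / 2) b); lra.
  - intros v Hv. apply HPe. lra.
Qed.

Lemma left_limit f u t L : continuity_pt f u -> t < u -> (forall v, t <= v < u -> f v <= L) -> f u <= L.
Proof.
  intros Hc Htu Hv. apply Rnot_lt_le. intro Hlt.
  destruct (Hc (f u - L) ltac:(lra)) as [d [Hd Hd']].
  set (v := Rmax t (u - d / 2)).
  assert (Hv1 : t <= v) by apply Rmax_l.
  assert (Hv2 : v < u) by (unfold v, Rmax; destruct (Rle_dec t (u - d / 2)); lra).
  assert (Hv3 : u - d / 2 <= v) by apply Rmax_r.
  specialize (Hv v ltac:(lra)).
  assert (Hne : v <> u) by lra.
  specialize (Hd' v ltac:(split; [split; [exact I| auto]| simpl; unfold R_dist; rewrite Rabs_left; lra])).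
  simpl in Hd'. unfold R_dist in Hd'. rewrite Rabs_left1 in Hd' by lra. lra.
Qed.

Section Fwd.
Variables g0 g1 g2 : R -> R.
Hypothesis Hd0 : forall t, is_derive g0 t (g1 t).
Hypothesis Hd1 : forall t, is_derive g1 t (g2 t).
Variable K : R.
Hypothesis HK0 : 0 <= K.
Hypothesis HK : forall t, Rabs (g0 t * g2 t) <= K * (g0 t ^ 2 + g1 t ^ 2).

Let h v := g1 v / g0 v.

Lemma h_cont u : g0 u <> 0 -> continuity_pt h u.
Proof. intro Hu. apply (continuity_pt_div g1 g0 u); auto; eapply der_cont_pt; eauto. Qed.

Lemma open_cond u M : g0 u <> 0 -> Rabs (h u) < M ->
  exists e, 0 < e /\ forall v, Rabs (v - u) < e -> g0 v <> 0 /\ Rabs (h v) < M.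
Proof.
  intros Hu HM.
  destruct (der_cont_eps g0 u (g1 u) (Hd0 u) (Rabs (g0 u)) ltac:(apply Rabs_pos_lt; auto)) as [d1 [Hd1' H1]].
  destruct (h_cont u Hu (M - Rabs (h u)) ltac:(lra)) as [d2 [Hd2 H2]].
  exists (Rmin d1 d2). split. apply Rmin_pos; auto.
  intros v Hv. assert (Hv1 : Rabs (v - u) < d1) by (eapply Rlt_le_trans; [exact Hv| apply Rmin_l]).
  assert (Hv2 : Rabs (v - u) < d2) by (eapply Rlt_le_trans; [exact Hv| apply Rmin_r]).
  split.
  - intro Hz. specialize (H1 v Hv1). rewrite Hz, Rminus_0_l, Rabs_Ropp in H1. lra.
  - destruct (Req_dec v u) as [->|Hne]. auto.
    specialize (H2 v ltac:(split; [split; [exact I| auto]| exact Hv2])).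
    simpl in H2. unfold R_dist in H2.
    generalize (Rabs_triang (h v - h u) (h u)). replace (h v - h u + h u) with (h v) by ring. lra.
Qed.

Lemma h_deriv c : g0 c <> 0 -> is_derive h c (g2 c / g0 c - h c ^ 2).
Proof.
  intro Hc. unfold h.
  replace (g2 c / g0 c - (g1 c / g0 c) ^ 2) with ((g2 c * g0 c - g1 c * g1 c) / g0 c ^ 2) by (field; auto).
  apply is_derive_div; auto.
Qed.

Lemma h_deriv_bound c M : g0 c <> 0 -> Rabs (h c) <= M ->
  Rabs (g2 c / g0 c - h c ^ 2) <= (K + 1) * (1 + M ^ 2).
Proof.
  intros Hc HM.
  assert (Hg : 0 < g0 c ^ 2) by (apply pow2_gt_0 || (simpl; nra); auto).
  assert (E : Rabs (g2 c / g0 c) <= K * (1 + h c ^ 2)).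
  { specialize (HK c). unfold h.
    replace (g2 c / g0 c) with ((g0 c * g2 c) / (g0 c ^ 2)) by (field; auto).
    replace (K * (1 + (g1 c / g0 c) ^ 2)) with (K * (g0 c ^ 2 + g1 c ^ 2) / g0 c ^ 2) by (field; auto).
    unfold Rdiv. rewrite Rabs_mult, (Rabs_pos_eq (/ _)) by (left; apply Rinv_0_lt_compat; auto).
    apply Rmult_le_compat_r; auto. left; apply Rinv_0_lt_compat; auto. }
  assert (Hh2 : h c ^ 2 <= M ^ 2).
  { rewrite <- (Rsqr_pow2 (h c)), <- Rsqr_pow2. rewrite Rsqr_abs. apply Rsqr_incr_1; auto. apply Rabs_pos. generalize (Rabs_pos (h c)); lra. }
  assert (0 <= h c ^ 2) by apply pow2_ge_0.
  eapply Rle_trans. apply Rabs_triang. rewrite Rabs_Ropp, (Rabs_pos_eq (h c ^ 2)) by auto.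
  nra.
Qed.

Lemma forward t : g0 t <> 0 -> forall s, t <= s ->
  s - t < / (10 * (K + 1) * (1 + Rabs (h t))) ->
  g0 s <> 0 /\ Rabs (h s) <= 2 * (1 + Rabs (h t)).
Proof.
  intros Ht s Hts Hr.
  set (x := Rabs (h t)) in *. assert (Hx : 0 <= x) by apply Rabs_pos.
  set (M := 2 * (1 + x)).
  set (r := / (10 * (K + 1) * (1 + x))) in *.
  assert (Hr0 : 0 < r) by (unfold r; apply Rinv_0_lt_compat; nra).
  assert (Hbr : (K + 1) * (1 + M ^ 2) * r <= (1 + x) / 2).
  { unfold r, M. apply Rmult_le_reg_r with (10 * (K + 1) * (1 + x)). nra.
    rewrite Rmult_assoc, Rinv_l by nra. nra. }
  set (P := fun v => g0 v <> 0 /\ Rabs (h v) < M).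
  assert (HP : forall v, t <= v <= s -> P v).
  { apply cont_ind; auto.
    intros u Hu HPu.
    assert (Hgu : g0 u <> 0 /\ Rabs (h u) < M).
    { destruct (Req_dec u t) as [->|Hne].
      { split; auto. unfold M; fold x; lra. }
      assert (Htu : t < u) by lra.
      set (phi := fun v => g0 v ^ 2 * exp (2 * M * (v - t))).
      assert (Hphi : forall v, t <= v < u -> g0 t ^ 2 <= phi v).
      { intros v Hv. destruct (Req_dec v t) as [->|Hvt].
        { unfold phi. rewrite Rminus_diag, Rmult_0_r, exp_0. lra. }
        destruct (MVT_gen phi t v (fun c => exp (2 * M * (c - t)) * (2 * g0 c * g1 c + 2 * M * g0 c ^ 2))) as [c [Hc Heq]].
        - intros c Hc. unfold phi.
          apply (is_derive_ext (fun v => g0 v ^ 2 * exp (2 * M * (v - t)))). intro; reflexivity.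
          replace (exp (2 * M * (c - t)) * (2 * g0 c * g1 c + 2 * M * g0 c ^ 2))
            with (INR 2 * g1 c * g0 c ^ Init.Nat.pred 2 * exp (2 * M * (c - t)) + g0 c ^ 2 * (2 * M * exp (2 * M * (c - t))))
            by (simpl; ring).
          apply (is_derive_mult (fun v => g0 v ^ 2) (fun v => exp (2 * M * (v - t)))).
          apply is_derive_pow. apply Hd0.
          auto_derive. auto. unfold Rminus; ring. intros; apply Rmult_comm.
        - intros c Hc. unfold phi. apply continuity_pt_mult.
          apply (der_cont_pt _ _ (INR 2 * g1 c * g0 c ^ Init.Nat.pred 2)). apply is_derive_pow. apply Hd0.
          apply (der_cont_pt _ _ (2 * M * exp (2 * M * (c - t)))). auto_derive. auto. unfold Rminus; ring.
        - unfold Rmin, Rmax in Hc. destruct (Rle_dec t v); [|lra].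
          assert (HPc : P c) by (apply HPu; lra). destruct HPc as [Hc0 Hc1].
          unfold h in Hc1.
          assert (Hg1 : Rabs (g1 c) <= M * Rabs (g0 c)).
          { replace (g1 c) with (g1 c / g0 c * g0 c) by (field; auto). rewrite Rabs_mult.
            apply Rmult_le_compat_r. apply Rabs_pos. lra. }
          assert (Hd : 0 <= 2 * g0 c * g1 c + 2 * M * g0 c ^ 2).
          { assert (- (g0 c * g1 c) <= Rabs (g0 c * g1 c)) by (rewrite <- Rabs_Ropp; apply Rle_abs).
            rewrite Rabs_mult in H.
            assert (Rabs (g0 c) * Rabs (g1 c) <= M * (Rabs (g0 c) * Rabs (g0 c))).
            { replace (M * (Rabs (g0 c) * Rabs (g0 c))) with (Rabs (g0 c) * (M * Rabs (g0 c))) by ring.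
              apply Rmult_le_compat_l; auto. apply Rabs_pos. }
            assert (E : Rabs (g0 c) * Rabs (g0 c) = g0 c ^ 2) by (rewrite <- Rabs_mult, Rabs_pos_eq; [ring| nra]).
            rewrite E in H0. lra. }
          assert (0 <= exp (2 * M * (c - t)) * (2 * g0 c * g1 c + 2 * M * g0 c ^ 2)).
          { apply Rmult_le_pos; auto. left; apply exp_pos. }
          assert (phi t = g0 t ^ 2) by (unfold phi; rewrite Rminus_diag, Rmult_0_r, exp_0; ring).
          nra. }
      assert (Hgu : g0 u <> 0).
      { intro Hz.
        assert (Hl := left_limit (fun v => - phi v) u t (- g0 t ^ 2)).
        assert (- phi u <= - g0 t ^ 2).
        { apply Hl; auto. apply continuity_pt_opp. unfold phi. apply continuity_pt_mult.
          apply (der_cont_pt _ _ (INR 2 * g1 u * g0 u ^ Init.Nat.pred 2)). apply is_derive_pow. apply Hd0.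
          apply (der_cont_pt _ _ (2 * M * exp (2 * M * (u - t)))). auto_derive. auto. unfold Rminus; ring.
          intros v Hv. specialize (Hphi v Hv). lra. }
        unfold phi in H. rewrite Hz in H. assert (0 < g0 t ^ 2) by (apply pow2_gt_0 || (simpl; nra); auto).
        simpl in H. lra. }
      split; auto.
      assert (Hhv : forall v, t <= v < u -> Rabs (h v - h t) <= (1 + x) / 2).
      { intros v Hv.
        assert (Hl := lip_bound h (fun c => g2 c / g0 c - h c ^ 2) t v ((K + 1) * (1 + M ^ 2))).
        unfold Rmin, Rmax in Hl. destruct (Rle_dec t v); [|lra].
        eapply Rle_trans. apply Hl.
        - intros c Hc. apply h_deriv. apply (HPu c). lra.
        - intros c Hc. apply h_deriv_bound. apply (HPu c). lra. left. apply (HPu c). lra.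
        - rewrite Rabs_pos_eq by lra. eapply Rle_trans; [|exact Hbr].
          apply Rmult_le_compat_l. apply Rmult_le_pos. lra. generalize (pow2_ge_0 M); lra. lra. }
      assert (Hup : h u <= x + (1 + x) / 2).
      { apply (left_limit h u t); auto. apply h_cont; auto.
        intros v Hv. specialize (Hhv v Hv). unfold x in *. 
        generalize (Rle_abs (h v - h t)) (Rle_abs (h t)). lra. }
      assert (Hlo : - h u <= x + (1 + x) / 2).
      { apply (left_limit (fun v => - h v) u t); auto. apply continuity_pt_opp, h_cont; auto.
        intros v Hv. specialize (Hhv v Hv). unfold x in *.
        generalize (Rle_abs (- (h v - h t))) (Rle_abs (- h t)). rewrite Rabs_Ropp, Rabs_Ropp. lra. }
      unfold M. unfold Rabs. destruct (Rcase_abs (h u)); lra. }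
    destruct Hgu as [Hgu1 Hgu2].
    destruct (open_cond u M Hgu1 Hgu2) as [e [He HPe]].
    exists e. split; auto. intros v Hv.
    destruct (Rlt_dec v u) as [Hvu|Hvu]. apply HPu; lra.
    apply HPe. rewrite Rabs_pos_eq by lra. lra. }
  destruct (HP s ltac:(lra)) as [H1 H2]. split; auto. unfold M in *. lra.
Qed.
End Fwd.

Lemma refl_der f df : (forall t, is_derive f t (df t)) ->
  forall v, is_derive (fun v => f (- v)) v (- df (- v)).
Proof.
  intros H v.
  assert (Hop : is_derive (fun v : R => - v) v (-1)).
  { auto_derive. auto. ring. }
  assert (Hc := is_derive_comp f (fun v => - v) v (df (- v)) (-1) (H (- v)) Hop).
  replace (- df (- v)) with (-1 * df (- v)) by ring. exact Hc.
Qed.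

Lemma refl_der2 f df : (forall t, is_derive f t (df t)) ->
  forall v, is_derive (fun v => - f (- v)) v (df (- v)).
Proof.
  intros H v. assert (Hc := is_derive_opp _ _ _ (refl_der f df H v)).
  replace (df (- v)) with (opp (- df (- v))). exact Hc.
  change (- - df (- v) = df (- v)). ring.
Qed.

Lemma two_sided g0 g1 g2 K :
  (forall t, is_derive g0 t (g1 t)) -> (forall t, is_derive g1 t (g2 t)) -> 0 <= K ->
  (forall t, Rabs (g0 t * g2 t) <= K * (g0 t ^ 2 + g1 t ^ 2)) ->
  forall t, g0 t <> 0 -> forall s,
  Rabs (s - t) < / (10 * (K + 1) * (1 + Rabs (g1 t / g0 t))) ->
  g0 s <> 0 /\ Rabs (g1 s / g0 s) <= 2 * (1 + Rabs (g1 t / g0 t)).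
Proof.
  intros Hd0 Hd1 HK0 HK t Ht s Hs.
  destruct (Rle_dec t s) as [Hts|Hts].
  - apply (forward g0 g1 g2 Hd0 Hd1 K HK0 HK t Ht s Hts).
    rewrite Rabs_pos_eq in Hs by lra. exact Hs.
  - assert (R1 := forward (fun v => g0 (- v)) (fun v => - g1 (- v)) (fun v => g2 (- v))
       (refl_der g0 g1 Hd0) (refl_der2 g1 g2 Hd1) K HK0
       ltac:(intro v; cbv beta; replace ((- g1 (- v)) ^ 2) with (g1 (- v) ^ 2) by ring; apply HK)
       (- t) ltac:(cbv beta; rewrite Ropp_involutive; auto) (- s) ltac:(lra)).
    cbv beta in R1. rewrite !Ropp_involutive in R1.
    replace (- g1 t / g0 t) with (- (g1 t / g0 t)) in R1 by (field; auto).
    rewrite Rabs_Ropp in R1.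
    rewrite Rabs_left in Hs by lra.
    destruct (R1 ltac:(lra)) as [R2 R3]. split; auto.
    replace (- g1 s / g0 s) with (- (g1 s / g0 s)) in R3 by (field; auto).
    rewrite Rabs_Ropp in R3. exact R3.
Qed.

Lemma gen_poly_G k a al x : (1 <= k)%nat -> 0 < x -> gen_poly k a al x = G k a al 0 (ln x).
Proof.
  intros Hk Hx. unfold gen_poly, G. rewrite sum_f_R0_sumr. replace (S (k - 1)) with k by lia.
  apply sumr_ext. intros i _. unfold Rpower. simpl. ring.
Qed.

Lemma gen_poly_derive k a al x : (1 <= k)%nat -> 0 < x ->
  is_derive (gen_poly k a al) x (G k a al 1 (ln x) / x).
Proof.
  intros Hk Hx.
  apply (is_derive_ext (fun x => sumr (fun i => a i * exp (al i * ln x)) k)).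
  { intro t. unfold gen_poly. rewrite sum_f_R0_sumr. replace (S (k - 1)) with k by lia. reflexivity. }
  replace (G k a al 1 (ln x) / x) with (sumr (fun i => a i * al i * exp (al i * ln x) / x) k).
  2:{ unfold G. unfold Rdiv. rewrite <- (Rmult_comm (/ x)), <- sumr_scal. apply sumr_ext. intros; simpl; ring. }
  apply (is_derive_sumr (fun i x => a i * exp (al i * ln x)) (fun i x => a i * al i * exp (al i * ln x) / x)).
  intro i. auto_derive. auto. field. lra.
Qed.

Theorem mainTheorem8 (k : nat) (a alpha : nat -> R) :
  (1 <= k)%nat ->
  (forall i, (i < k)%nat -> a i <> 0) ->
  (forall i j, (i < j < k)%nat -> alpha i < alpha j) ->
  amenable (fun x => 0 < x) (gen_poly k a alpha).
Proof.
  intros Hk Ha Hal.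
  destruct (global_KI k a alpha Hk Ha Hal) as [K [HK0 HK]].
  set (g0 := G k a alpha 0). set (g1 := G k a alpha 1). set (g2 := G k a alpha 2).
  assert (TS := two_sided g0 g1 g2 K (G_derive k a alpha 0) (G_derive k a alpha 1) HK0 HK).
  set (f := gen_poly k a alpha).
  assert (Hkap : forall x, 0 < x -> f x <> 0 -> kappa f x = Finite (Rabs (g1 (ln x) / g0 (ln x)))).
  { intros x Hx Hf. unfold kappa.
    destruct (Req_EM_T x 0) as [|_]. lra.
    destruct (Req_EM_T (f x) 0) as [|_]. contradiction.
    f_equal. rewrite (is_derive_unique f x _ (gen_poly_derive k a alpha x Hk Hx)).
    unfold f. rewrite (gen_poly_G k a alpha x Hk Hx). fold g0. fold g1.
    assert (g0 (ln x) <> 0) by (unfold g0; rewrite <- (gen_poly_G k a alpha x Hk Hx); exact Hf).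
    rewrite (Rabs_pos_eq x) by lra. unfold Rdiv. rewrite !Rabs_mult, !Rabs_inv, (Rabs_pos_eq x) by lra.
    field. split. apply Rabs_no_R0; auto. lra. }
  exists (10 * (K + 1)). split. lra.
  intros x Hx Hkx y Hy.
  assert (Hfx : f x <> 0).
  { intro Hz. unfold kappa in Hkx. destruct (Req_EM_T x 0). lra.
    destruct (Req_EM_T (f x) 0) as [_|]; [simpl in Hkx; auto| contradiction]. }
  unfold mu in *. rewrite (Hkap x Hx Hfx) in *.
  set (kx := Rabs (g1 (ln x) / g0 (ln x))) in *.
  simpl in Hy |- *.
  unfold rdist in Hy.
  destruct (Req_EM_T y 0) as [Hy0|Hy0]. { destruct (Req_EM_T x 0); simpl in Hy; [lra| contradiction]. }
  destruct (Rlt_dec 0 (y * x)) as [Hyx|Hyx]; [| simpl in Hy; contradiction].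
  assert (Hyp : 0 < y).
  { destruct (Rlt_dec 0 y); auto. assert (y < 0) by (destruct (Rtotal_order y 0) as [|[|]]; lra). nra. }
  simpl in Hy.
  rewrite ln_div in Hy by lra.
  assert (Hg0x : g0 (ln x) <> 0) by (unfold g0; rewrite <- (gen_poly_G k a alpha x Hk Hx); exact Hfx).
  destruct (TS (ln x) Hg0x (ln y) ltac:(rewrite Rabs_minus_sym; exact Hy)) as [Hg0y Hhy].
  fold kx in Hhy.
  assert (Hfy : f y <> 0) by (unfold f; rewrite (gen_poly_G k a alpha y Hk Hyp); auto).
  split; auto.
  rewrite (Hkap y Hyp Hfy). simpl.
  assert (0 <= kx) by apply Rabs_pos. nra.
Qed.
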